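(* Let $n>2$, $1\le k<n$, and let the triple $(\kappa,M,p)$ satisfy Assumption (A) (see context). Then there is a multivariate polynomial $g_{\kappa,M,p}:\mathbb{R}^n\times\mathbb{R}^{n\times k}\to\mathbb{R}$, which does not depend on the hypothesis $(R,r)$, such that for every $X\in\mathfrak{X}_0$ $$N(\hat\Omega_{\kappa,M,p,X})=\{y\in\mathbb{R}^n: g_{\kappa,M,p}(y,X)=0\}.$$ In particular $N(\hat\Omega_{\kappa,M,p,X})$ is an algebraic subset of $\mathbb{R}^n$.
   Context: Let $n>2$ and $1\le k<n$ be integers and $\mathfrak{X}_0=\{X\in\mathbb{R}^{n\times k}:\operatorname{rank}(X)=k\}$. For $X\in\mathfrak{X}_0$, $y\in\mathbb{R}^n$: $\hat\beta_X(y)=(X'X)^{-1}X'y$, $\hat u_X(y)=y-X\hat\beta_X(y)$. A hypothesis is $(R,r)$ with $R\in\mathbb{R}^{q\times k}$, $\operatorname{rank}(R)=q\ge1$, $r\in\mathbb{R}^q$. Construction of the prewhitened estimator $\hat\Omega_{\kappa,M,p,X}$ at $y$ (given kernel $\kappa:\mathbb{R}\to\mathbb{R}$, bandwidth $M$, integer order $p$): let $\hat V(y)=X'\operatorname{diag}(\hat u_X(y))\in\mathbb{R}^{k\times n}$ with columns $\hat V_{\cdot j}(y)$; $\hat V_p(y)=(\hat V_{\cdot(p+1)}(y),\dots,\hat V_{\cdot n}(y))\in\mathbb{R}^{k\times(n-p)}$; $\hat V_1(y)\in\mathbb{R}^{kp\times(n-p)}$ has $j$-th column $(\hat V_{\cdot(j+p-1)}(y)',\dots,\hat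 V_{\cdot(j+1)}(y)',\hat V_{\cdot j}(y)')'$. If $\hat V_1\hat V_1'$ is invertible, $\hat A^{(p)}(y)=(\hat A_1(y),\dots,\hat A_p(y))=\hat V_p(y)\hat V_1(y)'(\hat V_1(y)\hat V_1(y)')^{-1}$ ($\hat A_l\in\mathbb{R}^{k\times k}$) and $\hat Z(y)=\hat V_p(y)-\hat A^{(p)}(y)\hat V_1(y)\in\mathbb{R}^{k\times(n-p)}$. Put $\check\Gamma_i(y)=(n-p)^{-1}\sum_{j=i+1}^{n-p}\hat Z_{\cdot j}(y)\hat Z_{\cdot(j-i)}(y)'$ for $0\le i\le n-p-1$, $\check\Gamma_{-i}=\check\Gamma_i'$, and $\check\Psi(y)=\sum_{i=-(n-p-1)}^{n-p-1}\kappa(i/M(y))\check\Gamma_i(y)$, where if $M(y)=0$ the weight $\kappa(i/M(y))$ is read as $1$ for $i=0$ and $0$ for $i\neq0$. If $I_k-\sum_{l=1}^p\hat A_l(y)$ is invertible, with $F=(I_k-\sum_l\hat A_l(y))^{-1}$ set $\hat\Psi(y)=F\check\Psi(y)F'$ and $\hat\Omega_{\kappa,M,p,X}(y)=nR(X'X)^{-1}\hat\Psi(y)(X'X)^{-1}R'$. The estimator is undefined at $y$ if $\hat V_1(y)\hat V_1(y)'$ is singular, or $I_k-\sum_l\hat A_l(y)$ is singular, or $M(y)$ is undefined. $N(\hat\Omega_{\kappa,M,p,X})$ is the set of $y$ where it is undefined. Bandwidths (computed from $\hat Z(y)$; undefined whenever $\hat Z(y)$ is undefined or a denominator below vanishes;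 all tuning constants are functionally independent of $y$ and $X$). A weights vector is $\omega\in\mathbb{R}^k\setminus\{0\}$ with nonnegative entries. $\mathbb{M}_{AM}$: with $\hat\rho_i=\sum_{j=2}^{n-p}\hat Z_{ij}\hat Z_{i(j-1)}/\sum_{j=1}^{n-p-1}\hat Z_{ij}^2$, $\hat\sigma_i^2=(n-p-1)^{-1}\sum_{j=2}^{n-p}(\hat Z_{ij}-\hat\rho_i\hat Z_{i(j-1)})^2$ ($i=1,\dots,k$), $\hat\alpha_1=\sum_i\omega_i\frac{4\hat\rho_i^2\hat\sigma_i^4}{(1-\hat\rho_i)^6(1+\hat\rho_i)^2}\big/\sum_i\omega_i\frac{\hat\sigma_i^4}{(1-\hat\rho_i)^4}$, $\hat\alpha_2=\sum_i\omega_i\frac{4\hat\rho_i^2\hat\sigma_i^4}{(1-\hat\rho_i)^8}\big/\sum_i\omega_i\frac{\hat\sigma_i^4}{(1-\hat\rho_i)^4}$, $M(y)=c_1(\hat\alpha_j(y)n)^{c_2}$ for fixed $c_1,c_2>0$, $j\in\{1,2\}$, weights vector $\omega$. $\mathbb{M}_{NW}$: with a weights vector $\omega$, numbers $w(i)\ge0$ ($|i|\le n-p-1$), $w(0)=1$, $\bar\sigma_i(y)=\omega'\check\Gamma_{|i|}(y)\omega$, $M(y)=\bar c_2\big(\big[\sum_{i}|i|^{\bar c_1}w(i)\bar\sigma_i(y)/\sum_i w(i)\bar\sigma_i(y)\big]^2n\big)^{\bar c_3}$ (sums over $|i|\le n-p-1$), $\bar c_1$ a positive integer, $\bar c_2,\bar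 c_3>0$. $\mathbb{M}_{KV}$: constant bandwidths $M>0$. Assumption (A) on $(\kappa,M,p)$: (i) $\kappa$ is even, continuous, $\kappa(0)=1$, $\kappa(x)\to0$ as $x\to\infty$, and for every real $s>0$ and positive integer $J$ the $J\times J$ matrix $(\kappa((i-j)/s))_{i,j}$ is positive definite; (ii) $M\in\mathbb{M}_{AM}\cup\mathbb{M}_{NW}\cup\mathbb{M}_{KV}$; (iii) $p$ is an integer with $1\le p\le n/(k+1)$. *)

(* Defs.v *)
From HB Require Import structures.
From mathcomp Require Import all_boot all_order all_algebra.
From mathcomp Require Import all_classical all_reals all_analysis.
From mathcomp Require mpoly.
Set Implicit Arguments. Unset Strict Implicit. Unset Printing Implicit Defensive.
Import Order.TTheory GRing.Theory Num.Theory.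
Import numFieldNormedType.Exports.
Local Open Scope ring_scope.
Local Open Scope classical_set_scope.

Section Defs.
Variable R : realType.

(* entry (i,j) (0-indexed) of a matrix, 0 outside the range *)
Definition mget (m n : nat) (A : 'M[R]_(m, n)) (i j : nat) : R :=
  match (insub i : option 'I_m), (insub j : option 'I_n) with
  | Some a, Some b => A a b
  | _, _ => 0
  end.

Definition weights_vector (k : nat) (om : 'cV[R]_k) : Prop :=
  om != 0 /\ forall i, 0 <= om i 0.

(* BW_AM c1 c2 j om   : M(y) = c1 (alpha_j(y) n)^c2
   BW_NW om w c1 c2 c3 : M(y) = c2 ([sum |i|^c1 w(i) sbar_i / sum w(i) sbar_i]^2 n)^c3
   BW_KV M            : constant bandwidth M *)
Inductive bandwidth (k : nat) :=
  | BW_AM of R & R & nat & 'cV[R]_k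
  | BW_NW of 'cV[R]_k & (int -> R) & nat & R & R
  | BW_KV of R.

Section Estimator.
Variables (n k : nat) (p : nat).
Local Notation m := (n - p)%N.

Definition betahat (X : 'M[R]_(n, k)) (y : 'cV[R]_n) : 'cV[R]_k :=
  invmx (X^T *m X) *m X^T *m y.
Definition uhat (X : 'M[R]_(n, k)) (y : 'cV[R]_n) : 'cV[R]_n :=
  y - X *m betahat X y.

Definition Vhat (X : 'M[R]_(n, k)) (y : 'cV[R]_n) : 'M[R]_(k, n) :=
  X^T *m diag_mx (uhat X y)^T.
(* Vhat_p: columns p+1..n (1-indexed) *)
Definition Vhatp (V : 'M[R]_(k, n)) : 'M[R]_(k, m) :=
  \matrix_(a < k, j < m) mget V a (j + p).
(* Vhat_1: column j (1-indexed) = (V_{j+p-1}', ..., V_{j}')';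
   row r = l*k + a (0-indexed block l < p, component a < k) is entry a of
   V_{j+p-1-l} (1-indexed), i.e. 0-indexed column j + p - 1 - l. *)
Definition Vhat1 (V : 'M[R]_(k, n)) : 'M[R]_(k * p, m) :=
  \matrix_(r < k * p, j < m) mget V (r %% k) (j + p - 1 - r %/ k).

Definition Ahat (V : 'M[R]_(k, n)) : 'M[R]_(k, k * p) :=
  Vhatp V *m (Vhat1 V)^T *m invmx (Vhat1 V *m (Vhat1 V)^T).
(* sum_{l=1}^p A_l, where A_l is the l-th k x k block of Ahat *)
Definition sumA (A : 'M[R]_(k, k * p)) : 'M[R]_k :=
  \matrix_(a < k, b < k) \sum_(l < p) mget A a (l * k + b).
Definition Zhat (V : 'M[R]_(k, n)) : 'M[R]_(k, m) :=
  Vhatp V - Ahat V *m Vhat1 V.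

(* checkGamma_i, 0 <= i <= m-1 (sum over 1-indexed j = i+1..m) *)
Definition Gam (Z : 'M[R]_(k, m)) (i : nat) : 'M[R]_k :=
  (m%:R)^-1 *: \sum_(i <= j < m)
     (\matrix_(a < k, b < k) (mget Z a j * mget Z b (j - i))).

(* kernel weight kappa(i / M), read as 1_{i = 0} when M = 0 *)
Definition kweight (kappa : R -> R) (M : R) (i : int) : R :=
  if M == 0 then (i == 0)%:R else kappa (i%:~R / M).

Definition checkPsi (kappa : R -> R) (M : R) (Z : 'M[R]_(k, m)) : 'M[R]_k :=
  \sum_(0 <= i < m) kweight kappa M i%:Z *: Gam Z i
  + \sum_(1 <= i < m) kweight kappa M (- i%:Z) *: (Gam Z i)^T.

Definition rho_num (Z : 'M[R]_(k, m)) (i : 'I_k) : R :=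
  \sum_(1 <= j < m) mget Z i j * mget Z i (j - 1).
Definition rho_den (Z : 'M[R]_(k, m)) (i : 'I_k) : R :=
  \sum_(0 <= j < m.-1) mget Z i j ^+ 2.
Definition rhohat Z i := rho_num Z i / rho_den Z i.
Definition sig2hat (Z : 'M[R]_(k, m)) (i : 'I_k) : R :=
  ((m.-1)%:R)^-1 * \sum_(1 <= j < m) (mget Z i j - rhohat Z i * mget Z i (j - 1)) ^+ 2.

Definition AM_bandwidth (c1 c2 : R) (jj : nat) (om : 'cV[R]_k)
    (Z : 'M[R]_(k, m)) : option R :=
  let rho := rhohat Z in
  let s2 := sig2hat Z in
  let D := \sum_(i < k) om i 0 * (s2 i ^+ 2 / (1 - rho i) ^+ 4) in
  if jj == 1%N then
    if [forall i, (rho_den Z i != 0) && ((1 - rho i) ^+ 6 * (1 + rho i) ^+ 2 != 0)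
                  && ((1 - rho i) ^+ 4 != 0)] && (D != 0) then
      let a := (\sum_(i < k) om i 0 * (4 * rho i ^+ 2 * s2 i ^+ 2
                    / ((1 - rho i) ^+ 6 * (1 + rho i) ^+ 2))) / D in
      Some (c1 * powR (a * n%:R) c2)
    else None
  else
    if [forall i, (rho_den Z i != 0) && ((1 - rho i) ^+ 8 != 0)
                  && ((1 - rho i) ^+ 4 != 0)] && (D != 0) then
      let a := (\sum_(i < k) om i 0 * (4 * rho i ^+ 2 * s2 i ^+ 2
                    / (1 - rho i) ^+ 8)) / D in
      Some (c1 * powR (a * n%:R) c2)
    else None.

(* integer index i = t - (m-1), t < 2m-1, ranges over |i| <= m-1 *)
Definition NW_bandwidth (om : 'cV[R]_k) (w : int -> R) (c1 : nat) (c2 c3 : R)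
    (Z : 'M[R]_(k, m)) : option R :=
  let idx (t : nat) : int := t%:Z - (m.-1)%:Z in
  let sbar (i : int) : R := (om^T *m Gam Z `|i|%N *m om) 0 0 in
  let num := \sum_(t < (2 * m).-1) (`|idx t|%N%:R ^+ c1 * w (idx t) * sbar (idx t)) in
  let den := \sum_(t < (2 * m).-1) (w (idx t) * sbar (idx t)) in
  if den != 0 then Some (c2 * powR ((num / den) ^+ 2 * n%:R) c3) else None.

Definition bandwidth_val (bw : bandwidth k) (Z : 'M[R]_(k, m)) : option R :=
  match bw with
  | BW_AM c1 c2 jj om => AM_bandwidth c1 c2 jj om Z
  | BW_NW om w c1 c2 c3 => NW_bandwidth om w c1 c2 c3 Z
  | BW_KV M => Some M
  end.

Definition hatOmega (kappa : R -> R) (bw : bandwidth k) (q : nat)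
    (X : 'M[R]_(n, k)) (Rm : 'M[R]_(q, k)) (y : 'cV[R]_n) : option 'M[R]_q :=
  let V := Vhat X y in
  if Vhat1 V *m (Vhat1 V)^T \in unitmx then
    let B := 1%:M - sumA (Ahat V) in
    if B \in unitmx then
      let Z := Zhat V in
      match bandwidth_val bw Z with
      | Some M =>
          let F := invmx B in
          let Psi := F *m checkPsi kappa M Z *m F^T in
          let S := invmx (X^T *m X) in
          Some (n%:R *: (Rm *m S *m Psi *m S *m Rm^T))
      | None => None
      end
    else None
  else None.

Definition Nset (kappa : R -> R) (bw : bandwidth k) (q : nat)
    (X : 'M[R]_(n, k)) (Rm : 'M[R]_(q, k)) : set 'cV[R]_n :=
  [set y | hatOmega kappa bw X Rm y = None].

Definition kernel_ok (kappa : R -> R) : Prop :=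
  (forall x, kappa (- x) = kappa x) /\ continuous kappa /\ kappa 0 = 1 /\
  (kappa x @[x --> +oo] --> 0) /\
  (forall (s : R), 0 < s -> forall (J : nat) (v : 'cV[R]_J), v != 0 ->
     0 < (v^T *m (\matrix_(i < J, j < J) kappa ((i%:R - j%:R) / s)) *m v) 0 0).

Definition bandwidth_ok (bw : bandwidth k) : Prop :=
  match bw with
  | BW_AM c1 c2 jj om => 0 < c1 /\ 0 < c2 /\ (jj = 1%N \/ jj = 2%N) /\ weights_vector om
  | BW_NW om w c1 c2 c3 =>
      weights_vector om /\ (forall i : int, (`|i|%N <= m.-1)%N -> 0 <= w i) /\ w 0 = 1 /\
      (0 < c1)%N /\ 0 < c2 /\ 0 < c3
  | BW_KV M => 0 < M
  end.

Definition assumptionA (kappa : R -> R) (bw : bandwidth k) : Prop :=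
  kernel_ok kappa /\ bandwidth_ok bw /\ (1 <= p)%N /\ (p * (k + 1) <= n)%N.

Definition env (X : 'M[R]_(n, k)) (y : 'cV[R]_n) : 'I_(n + n * k) -> R :=
  fun i => (row_mx y^T (mxvec X)) 0 i.

End Estimator.
End Defs.

(* Main.v *)
Require Import Defs.
From HB Require Import structures.
From mathcomp Require Import all_boot all_order all_algebra.
From mathcomp Require Import all_classical all_reals all_analysis.
From mathcomp Require mpoly.
From mathcomp Require Import ring lra fingroup perm.
Import Order.TTheory GRing.Theory Num.Theory.
Local Open Scope ring_scope.
Set Implicit Arguments. Unset Strict Implicit. Unset Printing Implicit Defensive.
Canonical mpoly_mpoly__canonical__GRing_ComSemiAlgebra := mpoly.mpoly_mpoly__canonical__GRing_ComSemiAlgebra.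
Canonical mpoly_mpoly__canonical__eqtype_Equality := mpoly.mpoly_mpoly__canonical__eqtype_Equality.
Canonical mpoly_mpoly__canonical__Algebra_AddMagma := mpoly.mpoly_mpoly__canonical__Algebra_AddMagma.
Canonical mpoly_mpoly__canonical__GRing_ComNzRing := mpoly.mpoly_mpoly__canonical__GRing_ComNzRing.
Canonical mpoly_mpoly__canonical__GRing_PzSemiRing := mpoly.mpoly_mpoly__canonical__GRing_PzSemiRing.
Canonical mpoly_mpoly__canonical__Algebra_Nmodule := mpoly.mpoly_mpoly__canonical__Algebra_Nmodule.
Canonical mpoly_mpoly__canonical__GRing_LSemiAlgebra := mpoly.mpoly_mpoly__canonical__GRing_LSemiAlgebra.
Canonical mpoly_mpoly__canonical__GRing_ComUnitAlgebra := mpoly.mpoly_mpoly__canonical__GRing_ComUnitAlgebra.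
Canonical mpoly_mpoly__canonical__eqtype_SubEquality := mpoly.mpoly_mpoly__canonical__eqtype_SubEquality.
Canonical mpoly_mpoly__canonical__GRing_UnitRing := mpoly.mpoly_mpoly__canonical__GRing_UnitRing.
Canonical mpoly_mpoly__canonical__GRing_ComNzSemiRing := mpoly.mpoly_mpoly__canonical__GRing_ComNzSemiRing.
Canonical mpoly_mpoly__canonical__GRing_Lalgebra := mpoly.mpoly_mpoly__canonical__GRing_Lalgebra.
Canonical mpoly_mpoly__canonical__Algebra_ChoiceBaseAddMagma := mpoly.mpoly_mpoly__canonical__Algebra_ChoiceBaseAddMagma.
Canonical mpoly_mpoly__canonical__choice_SubChoice := mpoly.mpoly_mpoly__canonical__choice_SubChoice.
Canonical mpoly_mpoly__canonical__GRing_SemiAlgebra := mpoly.mpoly_mpoly__canonical__GRing_SemiAlgebra.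
Canonical mpoly_mpoly__canonical__GRing_NzRing := mpoly.mpoly_mpoly__canonical__GRing_NzRing.
Canonical mpoly_mpoly__canonical__Algebra_ChoiceBaseAddUMagma := mpoly.mpoly_mpoly__canonical__Algebra_ChoiceBaseAddUMagma.
Canonical mpoly_mpoly__canonical__GRing_UnitAlgebra := mpoly.mpoly_mpoly__canonical__GRing_UnitAlgebra.
Canonical mpoly_mpoly__canonical__GRing_Lmodule := mpoly.mpoly_mpoly__canonical__GRing_Lmodule.
Canonical mpoly_mpoly__canonical__GRing_ComUnitRing := mpoly.mpoly_mpoly__canonical__GRing_ComUnitRing.
Canonical mpoly_mpoly__canonical__eqtype_SubType := mpoly.mpoly_mpoly__canonical__eqtype_SubType.
Canonical mpoly_mpoly__canonical__GRing_IntegralDomain := mpoly.mpoly_mpoly__canonical__GRing_IntegralDomain.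
Canonical mpoly_mpoly__canonical__Algebra_AddSemigroup := mpoly.mpoly_mpoly__canonical__Algebra_AddSemigroup.
Canonical mpoly_mpoly__canonical__GRing_NzSemiRing := mpoly.mpoly_mpoly__canonical__GRing_NzSemiRing.
Canonical mpoly_mpoly__canonical__Algebra_BaseAddMagma := mpoly.mpoly_mpoly__canonical__Algebra_BaseAddMagma.
Canonical mpoly_mpoly__canonical__GRing_ComPzRing := mpoly.mpoly_mpoly__canonical__GRing_ComPzRing.
Canonical mpoly_mpoly__canonical__Algebra_Zmodule := mpoly.mpoly_mpoly__canonical__Algebra_Zmodule.
Canonical mpoly_mpoly__canonical__Algebra_BaseZmodule := mpoly.mpoly_mpoly__canonical__Algebra_BaseZmodule.
Canonical mpoly_mpoly__canonical__Algebra_AddUMagma := mpoly.mpoly_mpoly__canonical__Algebra_AddUMagma.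
Canonical mpoly_mpoly__canonical__GRing_ComAlgebra := mpoly.mpoly_mpoly__canonical__GRing_ComAlgebra.
Canonical mpoly_mpoly__canonical__GRing_Algebra := mpoly.mpoly_mpoly__canonical__GRing_Algebra.
Canonical mpoly_mpoly__canonical__GRing_PzRing := mpoly.mpoly_mpoly__canonical__GRing_PzRing.
Canonical mpoly_mpoly__canonical__GRing_ComPzSemiRing := mpoly.mpoly_mpoly__canonical__GRing_ComPzSemiRing.
Canonical mpoly_mpoly__canonical__Algebra_BaseAddUMagma := mpoly.mpoly_mpoly__canonical__Algebra_BaseAddUMagma.
Canonical mpoly_mpoly__canonical__GRing_LSemiModule := mpoly.mpoly_mpoly__canonical__GRing_LSemiModule.
Canonical mpoly_mpoly__canonical__choice_Choice := mpoly.mpoly_mpoly__canonical__choice_Choice.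
Section Gen.
Variables (R : realType) (N : nat) (T : Type) (e : T -> 'I_N -> R).

Definition polyF (f : T -> R) := exists g : mpoly.mpoly N R, forall t, f t = mpoly.meval (e t) g.

Lemma polyF_C c : polyF (fun _ => c).
Proof. exists (mpoly.mpolyC N c) => t; by rewrite mpoly.mevalC. Qed.
Lemma polyF_var i : polyF (fun t => e t i).
Proof. exists (mpoly.mpolyX R (mpoly.mnm1 i)) => t; by rewrite mpoly.mevalXU. Qed.
Lemma polyF_add f g : polyF f -> polyF g -> polyF (fun t => f t + g t).
Proof. move=> [a Ha] [b Hb]; exists (a + b) => t; by rewrite mpoly.mevalD Ha Hb. Qed.
Lemma polyF_mul f g : polyF f -> polyF g -> polyF (fun t => f t * g t).
Proof. move=> [a Ha] [b Hb]; exists (a * b) => t; by rewrite mpoly.mevalM Ha Hb. Qed.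
Lemma polyF_ext f g : polyF f -> (forall t, f t = g t) -> polyF g.
Proof. move=> [a Ha] E; exists a => t; by rewrite -E. Qed.

Lemma polyF_prod (I : Type) (r : seq I) (Pr : pred I) (F : I -> T -> R) :
  (forall i, polyF (F i)) -> polyF (fun t => \prod_(i <- r | Pr i) F i t).
Proof.
move=> H; elim: r => [|a r IH].
  by apply: polyF_ext (polyF_C 1) _ => t; rewrite big_nil.
case Pa: (Pr a).
  by apply: polyF_ext (polyF_mul (H a) IH) _ => t; rewrite big_cons Pa.
by apply: polyF_ext IH _ => t; rewrite big_cons Pa.
Qed.

Definition ratF (D : T -> Prop) (f : T -> R) :=
  exists P Q, polyF P /\ polyF Q /\ forall t, D t -> Q t != 0 /\ f t = P t / Q t.

Lemma ratF_poly D f : polyF f -> ratF D f.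
Proof.
move=> H; exists f, (fun _ => 1); split=> //; split; first exact: polyF_C.
by move=> t _; rewrite oner_neq0 divr1.
Qed.
Lemma ratF_C D c : ratF D (fun _ => c).
Proof. exact/ratF_poly/polyF_C. Qed.
Lemma ratF_var D i : ratF D (fun t => e t i).
Proof. exact/ratF_poly/polyF_var. Qed.
Lemma ratF_ext D f g : ratF D f -> (forall t, D t -> f t = g t) -> ratF D g.
Proof.
move=> [P [Q [hP [hQ H]]]] E; exists P, Q; split=> //; split=> // t Dt.
by have [? <-] := H t Dt; rewrite -E.
Qed.
Lemma ratF_dom D D' f : ratF D f -> (forall t, D' t -> D t) -> ratF D' f.
Proof.
move=> [P [Q [hP [hQ H]]]] E; exists P, Q; split=> //; split=> // t Dt; exact: H (E _ Dt).
Qed.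
Lemma ratF_add D f g : ratF D f -> ratF D g -> ratF D (fun t => f t + g t).
Proof.
move=> [P [Q [hP [hQ H]]]] [P' [Q' [hP' [hQ' H']]]].
exists (fun t => P t * Q' t + P' t * Q t), (fun t => Q t * Q' t); split.
  by apply: polyF_add; apply: polyF_mul.
split; first exact: polyF_mul.
move=> t Dt; have [nQ ->] := H t Dt; have [nQ' ->] := H' t Dt.
rewrite mulf_neq0 //; split=> //; field; by apply/andP.
Qed.
Lemma ratF_mul D f g : ratF D f -> ratF D g -> ratF D (fun t => f t * g t).
Proof.
move=> [P [Q [hP [hQ H]]]] [P' [Q' [hP' [hQ' H']]]].
exists (fun t => P t * P' t), (fun t => Q t * Q' t); split; first exact: polyF_mul.
split; first exact: polyF_mul.
move=> t Dt; have [nQ ->] := H t Dt; have [nQ' ->] := H' t Dt.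
rewrite mulf_neq0 //; split=> //; field; by apply/andP.
Qed.
Lemma ratF_opp D f : ratF D f -> ratF D (fun t => - f t).
Proof.
move=> h; apply: (@ratF_ext D (fun t => -1 * f t)); first exact: (ratF_mul (ratF_C D (-1)) h).
by move=> t _; rewrite mulN1r.
Qed.
Lemma ratF_nz D f : ratF D f -> exists h, polyF h /\ forall t, D t -> (f t != 0 <-> h t != 0).
Proof.
move=> [P [Q [hP [hQ H]]]]; exists P; split=> // t Dt; have [nQ ->] := H t Dt.
by rewrite mulf_eq0 invr_eq0 (negbTE nQ) orbF.
Qed.
Lemma ratF_div D f g : ratF D f -> ratF D g -> ratF (fun t => D t /\ g t != 0) (fun t => f t / g t).
Proof.
move=> [P [Q [hP [hQ H]]]] [P' [Q' [hP' [hQ' H']]]].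
exists (fun t => P t * Q' t), (fun t => Q t * P' t); split; first exact: polyF_mul.
split; first exact: polyF_mul.
move=> t [Dt ng]; have [nQ E] := H t Dt; have [nQ' E'] := H' t Dt.
move: ng; rewrite E E' => ng.
have nP' : P' t != 0 by move: ng; apply: contra => /eqP ->; rewrite mul0r.
rewrite mulf_neq0 //; split=> //; field; by rewrite nQ nQ' nP'.
Qed.
Lemma ratF_sum D (I : Type) (r : seq I) (Pr : pred I) (F : I -> T -> R) :
  (forall i, ratF D (F i)) -> ratF D (fun t => \sum_(i <- r | Pr i) F i t).
Proof.
move=> H; elim: r => [|a r IH].
  by apply: ratF_ext (ratF_C D 0) _ => t _; rewrite big_nil.
case Pa: (Pr a).
  by apply: ratF_ext (ratF_add (H a) IH) _ => t _; rewrite big_cons Pa.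
by apply: ratF_ext IH _ => t _; rewrite big_cons Pa.
Qed.
Lemma ratF_prod D (I : Type) (r : seq I) (Pr : pred I) (F : I -> T -> R) :
  (forall i, ratF D (F i)) -> ratF D (fun t => \prod_(i <- r | Pr i) F i t).
Proof.
move=> H; elim: r => [|a r IH].
  by apply: ratF_ext (ratF_C D 1) _ => t _; rewrite big_nil.
case Pa: (Pr a).
  by apply: ratF_ext (ratF_mul (H a) IH) _ => t _; rewrite big_cons Pa.
by apply: ratF_ext IH _ => t _; rewrite big_cons Pa.
Qed.
Lemma ratF_exp D f j : ratF D f -> ratF D (fun t => f t ^+ j).
Proof.
move=> H; apply: ratF_ext (@ratF_prod D nat (index_iota 0 j) xpredT (fun _ => f) (fun _ => H)) _.
by move=> t _; rewrite prodr_const_nat subn0.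
Qed.

Definition ratM (D : T -> Prop) a b (F : T -> 'M[R]_(a, b)) :=
  forall i j, ratF D (fun t => F t i j).

Lemma ratM_dom D D' a b (F : T -> 'M[R]_(a, b)) : ratM D F -> (forall t, D' t -> D t) -> ratM D' F.
Proof. by move=> H E i j; apply: ratF_dom (H i j) E. Qed.
Lemma ratM_ext D a b (F G : T -> 'M[R]_(a, b)) : ratM D F -> (forall t, D t -> F t = G t) -> ratM D G.
Proof. by move=> H E i j; apply: ratF_ext (H i j) _ => t Dt; rewrite E. Qed.
Lemma ratM_C D a b (A : 'M[R]_(a, b)) : ratM D (fun _ => A).
Proof. by move=> i j; apply: ratF_C. Qed.
Lemma ratM_add D a b (F G : T -> 'M[R]_(a, b)) : ratM D F -> ratM D G -> ratM D (fun t => F t + G t).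
Proof. by move=> HF HG i j; apply: ratF_ext (ratF_add (HF i j) (HG i j)) _ => t _; rewrite mxE. Qed.
Lemma ratM_opp D a b (F : T -> 'M[R]_(a, b)) : ratM D F -> ratM D (fun t => - F t).
Proof. by move=> HF i j; apply: ratF_ext (ratF_opp (HF i j)) _ => t _; rewrite mxE. Qed.
Lemma ratM_sub D a b (F G : T -> 'M[R]_(a, b)) : ratM D F -> ratM D G -> ratM D (fun t => F t - G t).
Proof. by move=> HF HG; apply: ratM_add => //; apply: ratM_opp. Qed.
Lemma ratM_scale D a b (c : T -> R) (F : T -> 'M[R]_(a, b)) : ratF D c -> ratM D F -> ratM D (fun t => c t *: F t).
Proof. by move=> Hc HF i j; apply: ratF_ext (ratF_mul Hc (HF i j)) _ => t _; rewrite mxE. Qed.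
Lemma ratM_tr D a b (F : T -> 'M[R]_(a, b)) : ratM D F -> ratM D (fun t => (F t)^T).
Proof. by move=> HF i j; apply: ratF_ext (HF j i) _ => t _; rewrite mxE. Qed.
Lemma ratM_mul D a b c (F : T -> 'M[R]_(a, b)) (G : T -> 'M[R]_(b, c)) :
  ratM D F -> ratM D G -> ratM D (fun t => F t *m G t).
Proof.
move=> HF HG i j.
apply: ratF_ext (@ratF_sum D _ (index_enum 'I_b) xpredT (fun l t => F t i l * G t l j) _) _.
  by move=> l; apply: ratF_mul.
by move=> t _; rewrite mxE.
Qed.
Lemma ratM_diag D b (F : T -> 'M[R]_(1, b)) : ratM D F -> ratM D (fun t => diag_mx (F t)).
Proof.
move=> HF i j; apply: ratF_ext (ratF_mul (HF 0 i) (ratF_C D (i == j)%:R)) _ => t _.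
by rewrite mxE mulr_natr.
Qed.
Lemma ratF_mget D a b (F : T -> 'M[R]_(a, b)) i j : ratM D F -> ratF D (fun t => mget (F t) i j).
Proof.
move=> HF; rewrite /mget; case: (insub i) => [x|]; last exact: ratF_C.
case: (insub j) => [y|]; last exact: ratF_C.
exact: HF.
Qed.
Lemma ratF_det D a (F : T -> 'M[R]_a) : ratM D F -> ratF D (fun t => \det (F t)).
Proof.
move=> HF.
apply: ratF_ext (@ratF_sum D _ (index_enum ({perm 'I_a} : finType)) xpredT (fun s t => (-1) ^+ perm.odd_perm s * \prod_i F t i (s i)) _) _.
  move=> s; apply: ratF_mul; first exact: ratF_C.
  by apply: (@ratF_prod D _ _ xpredT (fun i t => F t i (s i))) => i; apply: HF.
by move=> t _; rewrite /determinant.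
Qed.
Lemma ratM_adj D a (F : T -> 'M[R]_a) : ratM D F -> ratM D (fun t => \adj (F t)).
Proof.
move=> HF i j; apply: ratF_ext (ratF_mul (ratF_C D ((-1) ^+ (j + i))) (@ratF_det D _ (fun t => row' j (col' i (F t))) _)) _.
  by move=> x y; apply: ratF_ext (HF (lift j x) (lift i y)) _ => t _; rewrite !mxE.
by move=> t _; rewrite mxE.
Qed.
Lemma ratM_inv D a (F : T -> 'M[R]_a) : ratM D F ->
  ratM (fun t => D t /\ F t \in unitmx) (fun t => invmx (F t)).
Proof.
move=> HF i j.
have H := ratF_div (ratM_adj HF i j) (ratF_det HF).
apply: ratF_ext (ratF_dom H _) _.
  by move=> t [Dt U]; split=> //; move: U; rewrite unitmxE unitfE.
move=> t [Dt U]; rewrite /invmx U. by rewrite !mxE mulrC.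
Qed.
Lemma ratM_unit D a (F : T -> 'M[R]_a) : ratM D F ->
  exists h, polyF h /\ forall t, D t -> (F t \in unitmx <-> h t != 0).
Proof.
move=> HF; have [h [ph Hh]] := ratF_nz (ratF_det HF); exists h; split=> // t Dt.
by rewrite unitmxE unitfE; apply: Hh.
Qed.
End Gen.
Lemma fullrank_unit (R : realType) n k (X : 'M[R]_(n, k)) : \rank X = k -> X^T *m X \in unitmx.
Proof.
move=> rk; rewrite -row_free_unit; apply/inj_row_free => v Hv.
set w := v *m X^T.
have ww : w *m w^T = 0 by rewrite /w trmx_mul trmxK mulmxA -(mulmxA v) Hv mul0mx.
have w0 : w = 0.
  apply/matrixP => i j; rewrite (ord1 i) [RHS]mxE.
  have : (w *m w^T) 0 0 = 0 by rewrite ww mxE.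
  rewrite mxE => /psumr_eq0P H.
  have nn : forall l : 'I_n, true -> 0 <= w 0 l * w^T l 0.
    by move=> l _; rewrite [w^T _ _]mxE -expr2 sqr_ge0.
  have := H nn j isT; rewrite [w^T _ _]mxE -expr2 => /eqP; rewrite sqrf_eq0 => /eqP ->.
  by [].
have rf : row_free X^T by rewrite /row_free mxrank_tr rk.
by apply: (row_free_inj rf); rewrite mul0mx -w0.
Qed.

Section Spec.
Variables (R : realType) (n k p : nat).
Local Notation m := (n - p)%N.
Definition TT := ('M[R]_(n, k) * 'cV[R]_n)%type.
Definition ee (t : TT) := env t.1 t.2.
Definition D0 (t : TT) := t.1^T *m t.1 \in unitmx.

Notation ratMe := (@ratM R _ TT ee).
Notation ratFe := (@ratF R _ TT ee).
Notation polyFe := (@polyF R _ TT ee).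

Lemma ratM_y D : ratMe D (fun t => t.2).
Proof.
move=> i j; apply: ratF_ext (ratF_var _ _ (lshift (n * k) i)) _ => t _.
by rewrite /ee /env row_mxEl mxE (ord1 j).
Qed.
Lemma ratM_X D : ratMe D (fun t => t.1).
Proof.
move=> i j; apply: ratF_ext (ratF_var _ _ (rshift n (mxvec_index i j))) _ => t _.
by rewrite /ee /env row_mxEr mxvecE.
Qed.

Definition VV (t : TT) := Vhat t.1 t.2.
Definition GG (t : TT) := Vhat1 p (VV t) *m (Vhat1 p (VV t))^T.
Definition BB (t : TT) := 1%:M - sumA (Ahat p (VV t)).
Definition D1 t := D0 t /\ GG t \in unitmx.
Definition D2 t := D1 t /\ BB t \in unitmx.

Lemma ratM_V : ratMe D0 VV.
Proof.
have Hb : ratMe D0 (fun t => betahat t.1 t.2).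
  apply: ratM_mul; last exact: ratM_y.
  apply: ratM_mul; last exact/ratM_tr/ratM_X.
  apply: ratM_dom (ratM_inv (ratM_mul (ratM_tr (ratM_X (fun _ => True))) (ratM_X _))) _.
  by [].
apply: ratM_mul; first exact/ratM_tr/ratM_X.
apply/ratM_diag/ratM_tr/ratM_sub; first exact: ratM_y.
exact: ratM_mul (ratM_X _) Hb.
Qed.

Lemma ratM_Vp D (F : TT -> 'M[R]_(k, n)) : ratMe D F -> ratMe D (fun t => Vhatp p (F t)).
Proof. by move=> H i j; apply: ratF_ext (ratF_mget _ _ H) _ => t _; rewrite mxE. Qed.
Lemma ratM_V1 D (F : TT -> 'M[R]_(k, n)) : ratMe D F -> ratMe D (fun t => Vhat1 p (F t)).
Proof. by move=> H i j; apply: ratF_ext (ratF_mget _ _ H) _ => t _; rewrite mxE. Qed.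
Lemma ratM_sumA D (F : TT -> 'M[R]_(k, k * p)) : ratMe D F -> ratMe D (fun t => sumA (F t)).
Proof.
move=> H i j; apply: ratF_ext (@ratF_sum _ _ _ _ D _ (index_enum 'I_p) xpredT (fun l t => mget (F t) i (l * k + j)) _) _.
  by move=> l; apply: ratF_mget.
by move=> t _; rewrite mxE.
Qed.

Lemma ratM_G : ratMe D0 GG.
Proof. by apply: ratM_mul; [|apply: ratM_tr]; apply/ratM_V1/ratM_V. Qed.

Lemma ratM_A : ratMe D1 (fun t => Ahat p (VV t)).
Proof.
apply: ratM_mul; last first.
  by apply: ratM_dom (ratM_inv ratM_G) _.
by apply: ratM_dom (ratM_mul (ratM_Vp ratM_V) (ratM_tr (ratM_V1 ratM_V))) _ => t [].
Qed.

Lemma ratM_B : ratMe D1 BB.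
Proof. apply: ratM_sub; [exact: ratM_C | exact: ratM_sumA ratM_A]. Qed.

Lemma ratM_Z : ratMe D2 (fun t => Zhat p (VV t)).
Proof.
apply: ratM_dom (_ : ratMe D1 _) _; last by move=> t [].
apply: ratM_sub; first by apply: ratM_dom (ratM_Vp ratM_V) _ => t [].
apply: ratM_mul ratM_A _.
by apply: ratM_dom (ratM_V1 ratM_V) _ => t [].
Qed.



Section BW.
Variables (D : TT -> Prop) (Z : TT -> 'M[R]_(k, m)) (HZ : ratMe D Z).

Lemma ratM_Gam i : ratMe D (fun t => Gam (Z t) i).
Proof.
move=> a b.
apply: ratF_ext (ratF_mul (ratF_C ee D (m%:R)^-1)
  (@ratF_sum _ _ _ _ D _ (index_iota i m) xpredT (fun j t => mget (Z t) a j * mget (Z t) b (j - i)) _)) _.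
  by move=> j; apply: ratF_mul; apply: ratF_mget.
by move=> t _; rewrite mxE summxE; congr (_ * _); apply: eq_bigr => j _; rewrite mxE.
Qed.

Lemma NW_ok om w c1 c2 c3 : exists h, polyFe h /\
  forall t, D t -> (isSome (NW_bandwidth om w c1 c2 c3 (Z t)) <-> h t != 0).
Proof.
pose idx (s : nat) : int := s%:Z - (m.-1)%:Z.
have Hd : ratFe D (fun t => \sum_(s < (2 * m).-1) (w (idx s) * (om^T *m Gam (Z t) `|idx s|%N *m om) 0 0)).
  apply: ratF_ext (@ratF_sum _ _ _ _ D _ (index_enum 'I_((2 * m).-1)) xpredT (fun (s : 'I_((2 * m).-1)) t => w (idx s) * (om^T *m Gam (Z t) `|idx s|%N *m om) 0 0) _) _; last by [].
  move=> s; apply: ratF_mul; first exact: ratF_C.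
  apply: ratM_mul; last exact: ratM_C.
  by apply: ratM_mul; [exact: ratM_C | exact: ratM_Gam].
have [h [ph Hh]] := ratF_nz Hd; exists h; split=> // t Dt.
rewrite /NW_bandwidth; case: ifP => E /=.
  by split=> // _; exact: (proj1 (Hh t Dt) E).
split=> // H; have := proj2 (Hh t Dt) H; by rewrite E.
Qed.

End BW.

Section Comb.
Variables (D : TT -> Prop) (a b c : 'I_k -> TT -> R) (d : TT -> R).
Definition Da t := D t /\ forall i, a i t != 0.
Definition Dbc t := Da t /\ forall i, c i t != 0.
Hypotheses (Ha : forall i, ratFe D (a i)) (Hb : forall i, ratFe Da (b i))
  (Hc : forall i, ratFe Da (c i)) (Hdd : ratFe Dbc d).

Lemma comb_ok : exists h, polyFe h /\ forall t, D t ->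
  ([forall i, (a i t != 0) && (b i t != 0) && (c i t != 0)] && (d t != 0) <-> h t != 0).
Proof.
have [ha Ha'] := fin_all_exists (fun i => ratF_nz (Ha i)).
have [hb Hb'] := fin_all_exists (fun i => ratF_nz (Hb i)).
have [hc Hc'] := fin_all_exists (fun i => ratF_nz (Hc i)).
have [hd [phd Hd']] := ratF_nz Hdd.
exists (fun t => (\prod_i ha i t) * (\prod_i hb i t) * (\prod_i hc i t) * hd t); split.
  apply: polyF_mul => //; apply: polyF_mul; first apply: polyF_mul.
  - by apply: polyF_prod => i; case: (Ha' i).
  - by apply: polyF_prod => i; case: (Hb' i).
  - by apply: polyF_prod => i; case: (Hc' i).
move=> t Dt; split.
  move=> /andP[/forallP H dn].
  have Dat : Da t by split=> // i; have /andP[/andP[]] := H i.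
  have Dbt : Dbc t by split=> // i; have /andP[/andP[]] := H i.
  rewrite !mulf_neq0 //.
  - by apply/prodf_neq0 => i _; apply/(proj2 (Ha' i) t Dt); have /andP[/andP[]] := H i.
  - by apply/prodf_neq0 => i _; apply/(proj2 (Hb' i) t Dat); have /andP[/andP[]] := H i.
  - by apply/prodf_neq0 => i _; apply/(proj2 (Hc' i) t Dat); have /andP[/andP[]] := H i.
  - by apply/(Hd' t Dbt).
rewrite !mulf_eq0 !negb_or => /andP[/andP[/andP[/prodf_neq0 p1 /prodf_neq0 p2] /prodf_neq0 p3] p4].
have Dat : Da t by split=> // i; apply/(proj2 (Ha' i) t Dt)/p1.
have Dbt : Dbc t by split=> // i; apply/(proj2 (Hc' i) t Dat)/p3.
apply/andP; split; last by apply/(Hd' t Dbt).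
apply/forallP => i; rewrite (proj2 Dat i) /=; apply/andP; split.
  by apply/(proj2 (Hb' i) t Dat)/p2.
by apply/(proj2 (Hc' i) t Dat)/p3.
Qed.
End Comb.

Lemma AM_ok (D : TT -> Prop) (Z : TT -> 'M[R]_(k, m)) (HZ : ratMe D Z) c1 c2 jj om :
  exists h, polyFe h /\
  forall t, D t -> (isSome (AM_bandwidth c1 c2 jj om (Z t)) <-> h t != 0).
Proof.
pose a i t := rho_den (Z t) i.
have Ha : forall i, ratFe D (a i).
  move=> i; apply: ratF_ext (@ratF_sum _ _ _ _ D _ (index_iota 0 m.-1) xpredT (fun j t => mget (Z t) i j ^+ 2) _) _; last by [].
  by move=> j; apply/ratF_exp/ratF_mget.
have Hrho : forall i, ratFe (Da D a) (fun t => rhohat (Z t) i).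
  move=> i; apply: ratF_dom (ratF_div _ (Ha i)) _; last by move=> t [Dt H]; split.
  apply: ratF_ext (@ratF_sum _ _ _ _ D _ (index_iota 1 m) xpredT (fun j t => mget (Z t) i j * mget (Z t) i (j - 1)) _) _; last by [].
  by move=> j; apply/ratF_mul; apply/ratF_mget.
have HZ' : ratMe (Da D a) Z by apply: ratM_dom HZ _ => t [].
have Hs : forall i, ratFe (Da D a) (fun t => sig2hat (Z t) i).
  move=> i; apply: ratF_mul; first exact: ratF_C.
  apply: ratF_ext (@ratF_sum _ _ _ _ (Da D a) _ (index_iota 1 m) xpredT (fun j t => (mget (Z t) i j - rhohat (Z t) i * mget (Z t) i (j - 1)) ^+ 2) _) _; last by [].
  move=> j; apply/ratF_exp/ratF_add; first exact: ratF_mget.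
  by apply/ratF_opp/ratF_mul; [exact: Hrho | exact: ratF_mget].
pose c i t := (1 - rhohat (Z t) i) ^+ 4.
have H1r : forall i, ratFe (Da D a) (fun t => 1 - rhohat (Z t) i).
  by move=> i; apply/ratF_add; [exact: ratF_C | exact/ratF_opp].
have Hc : forall i, ratFe (Da D a) (c i) by move=> i; apply/ratF_exp.
pose d t := \sum_(i < k) om i 0 * (sig2hat (Z t) i ^+ 2 / (1 - rhohat (Z t) i) ^+ 4).
have Hd : ratFe (Dbc D a c) d.
  apply: ratF_ext (@ratF_sum _ _ _ _ (Dbc D a c) _ (index_enum 'I_k) xpredT (fun i t => om i 0 * (sig2hat (Z t) i ^+ 2 / (1 - rhohat (Z t) i) ^+ 4)) _) _; last by [].
  move=> i; apply: ratF_mul; first exact: ratF_C.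
  apply: ratF_dom (ratF_div (ratF_exp 2 (Hs i)) (Hc i)) _.
  by move=> t [Dt H]; split.
rewrite /AM_bandwidth; case: (jj == 1%N).
  pose b i t := (1 - rhohat (Z t) i) ^+ 6 * (1 + rhohat (Z t) i) ^+ 2.
  have Hb : forall i, ratFe (Da D a) (b i).
    move=> i; apply: ratF_mul; first exact/ratF_exp.
    by apply/ratF_exp/ratF_add; [exact: ratF_C | exact: Hrho].
  have [h [ph Hh]] := comb_ok Ha Hb Hc Hd.
  exists h; split=> // t Dt; cbv zeta; case: ifP => E /=.
    by split=> // _; exact: (proj1 (Hh t Dt) E).
  split=> // H; have := proj2 (Hh t Dt) H; by rewrite E.
pose b i t := (1 - rhohat (Z t) i) ^+ 8.
have Hb : forall i, ratFe (Da D a) (b i) by move=> i; apply/ratF_exp.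
have [h [ph Hh]] := comb_ok Ha Hb Hc Hd.
exists h; split=> // t Dt; cbv zeta; case: ifP => E /=.
  by split=> // _; exact: (proj1 (Hh t Dt) E).
split=> // H; have := proj2 (Hh t Dt) H; by rewrite E.
Qed.

Lemma bw_ok (D : TT -> Prop) (Z : TT -> 'M[R]_(k, m)) (HZ : ratMe D Z) (bw : bandwidth R k) :
  exists h, polyFe h /\
  forall t, D t -> (isSome (bandwidth_val bw (Z t)) <-> h t != 0).
Proof.
case: bw => [c1 c2 jj om|om w c1 c2 c3|M] /=.
- exact: AM_ok.
- exact: NW_ok.
- exists (fun _ => 1); split; first exact: polyF_C.
  by move=> t _; rewrite oner_neq0.
Qed.
End Spec.
Unset Implicit Arguments.
Local Open Scope classical_set_scope.
Theorem lemma3p1 (R : realType) (n k p : nat) (kappa : R -> R) (bw : bandwidth R k) :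
  (2 < n)%N -> (1 <= k)%N -> (k < n)%N ->
  assumptionA n p kappa bw ->
  exists g : mpoly.mpoly (n + n * k) R,
    forall (X : 'M[R]_(n, k)), \rank X = k ->
    forall (q : nat) (Rm : 'M[R]_(q, k)) (r : 'cV[R]_q),
      (1 <= q)%N -> \rank Rm = q ->
      Nset p kappa bw X Rm = [set y | mpoly.meval (env X y) g = 0].
Proof.
move=> _ _ _ _.
have [h1 [p1 H1]] := ratM_unit (@ratM_G R n k p).
have [h2 [p2 H2]] := ratM_unit (@ratM_B R n k p).
have [h3 [p3 H3]] := bw_ok (@ratM_Z R n k p) bw.
have [g Hg] := polyF_mul (polyF_mul p1 p2) p3.
exists g => X rk q Rm r _ _.
have D0t : D0 (X, _) := fullrank_unit rk.
rewrite /Nset; apply/seteqP; split=> y /=; rewrite /ee in Hg; rewrite -(Hg (X, y)) /=;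
  rewrite /hatOmega; cbv zeta.
- case: ifP => U1; last first.
    have U1' : (GG p (X, y) \in unitmx) = false := U1.
    move=> _; apply/eqP; rewrite !mulf_eq0; apply/orP; left; apply/orP; left.
    by apply/negP => /negP /(proj2 (H1 _ (D0t y))); rewrite U1'.
  have D1t : D1 p (X, y) by split.
  case: ifP => U2; last first.
    have U2' : (BB p (X, y) \in unitmx) = false := U2.
    move=> _; apply/eqP; rewrite !mulf_eq0; apply/orP; left; apply/orP; right.
    by apply/negP => /negP /(proj2 (H2 _ D1t)); rewrite U2'.
  have D2t : D2 p (X, y) by split.
  case E: (bandwidth_val bw (Zhat p (Vhat X y))) => [M|] // _.
  apply/eqP; rewrite !mulf_eq0; apply/orP; right.
  apply/negP => /negP /(proj2 (H3 _ D2t)).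
  by rewrite /VV /= E.
- move=> /eqP; rewrite !mulf_eq0 => /orP [/orP [] | ] /eqP h0.
  + have : ~ (GG p (X, y) \in unitmx) by move/(proj1 (H1 _ (D0t y))); rewrite h0 eqxx.
    by move/negP/negbTE => ->.
  + case: ifP => // U1.
    have D1t : D1 p (X, y) by split.
    have : ~ (BB p (X, y) \in unitmx) by move/(proj1 (H2 _ D1t)); rewrite h0 eqxx.
    by move/negP/negbTE => ->.
  + case: ifP => // U1.
    have D1t : D1 p (X, y) by split.
    case: ifP => // U2.
    have D2t : D2 p (X, y) by split.
    case E: (bandwidth_val bw (Zhat p (Vhat X y))) => [M|] //.
    have := proj1 (H3 _ D2t); rewrite /VV /= E h0 eqxx => H.
    by have := H isT.
Qed.
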